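(* For every $\varepsilon>0$ there is a constant $C_\varepsilon>0$ such that for every positive integer $n$ with $s=\omega(n)\ge 2$, \[ d(n)\le C_\varepsilon\left(\frac{(2+\varepsilon)\log n}{s\log s}\right)^{s}. \]
   Context: $d(n)$ is the number of positive divisors of $n$; $\omega(n)$ is the number of distinct prime factors of $n$. *)

(* Defs.v *)
From Stdlib Require Import Reals Arith List Lia Bool.
Import ListNotations.
Local Open Scope bool_scope.

Definition ndivisors (n : nat) : nat :=
  length (filter (fun k => Nat.eqb (Nat.modulo n k) 0) (seq 1 n)).

Definition primeb (p : nat) : bool :=
  Nat.leb 2 p &&
  forallb (fun k => negb (Nat.eqb (Nat.modulo p k) 0)) (seq 2 (p - 2)).

Definition omega (n : nat) : nat :=
  length (filter (fun p => primeb p && Nat.eqb (Nat.modulo n p) 0) (seq 1 n)).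

Example ndiv12 : ndivisors 12 = 6%nat. Proof. reflexivity. Qed.
Example om60 : omega 60 = 3%nat. Proof. reflexivity. Qed.
Example om1 : omega 1 = 0%nat. Proof. reflexivity. Qed.

(* Main.v *)
Require Import Defs.
From Stdlib Require Import Reals Lra Lia List ZArith.
Module MC.
From mathcomp Require Import all_boot zify.
Local Open Scope nat_scope.

Lemma mod_eq n k : Nat.modulo n k = n %% k.
Proof.
case: k => [|k]; first by rewrite modn0 Nat.mod_0_r.
symmetry; apply: (Nat.mod_unique n k.+1 (n %/ k.+1)).
  by apply/ltP; rewrite ltn_pmod.
by rewrite {1}(divn_eq n k.+1) mulnC -mulnE -plusE.
Qed.

Lemma seq_iota a b : List.seq a b = iota a b.
Proof. by elim: b a => //= b IH a; rewrite IH. Qed.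

Lemma filter_eq (f : nat -> bool) l : List.filter f l = filter f l.
Proof. by elim: l => //= x l ->. Qed.

Lemma ndiv_filter n : ndivisors n = size [seq d <- iota 1 n | d %| n].
Proof.
rewrite /ndivisors seq_iota filter_eq; congr size; apply: eq_filter => k.
by rewrite mod_eq /dvdn; apply/idP/idP => /eqP ->.
Qed.

Lemma size_add_div p e divs : size (PrimeDecompAux.add_divisors (p, e) divs) = e.+1 * size divs.
Proof.
rewrite /PrimeDecompAux.add_divisors; elim: e => [|e IH] /=; first by rewrite mul1n.
by rewrite size_merge size_cat size_map IH mulSn addnC.
Qed.

Lemma size_divisors n :
  size (divisors n) = foldr (fun p acc => (logn p n).+1 * acc) 1 (primes n).
Proof.
rewrite /divisors prime_decompE.
elim: (primes n) => //= p l IH.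
by rewrite size_add_div IH.
Qed.

Lemma ndiv_eq n : 0 < n ->
  ndivisors n = List.fold_right (fun p acc => Nat.mul (S (logn p n)) acc) 1 (primes n).
Proof.
move=> n0; rewrite ndiv_filter.
have -> : List.fold_right (fun p acc => Nat.mul (S (logn p n)) acc) 1 (primes n)
   = size (divisors n) by rewrite size_divisors; elim: (primes n) => //= p l ->.
apply: perm_size; apply: uniq_perm; first exact: filter_uniq (iota_uniq _ _).
  exact: divisors_uniq.
move=> d; rewrite mem_filter mem_iota -dvdn_divisors //.
case dv: (d %| n) => //=; rewrite add1n ltnS.
rewrite (dvdn_leq n0 dv) andbT lt0n; apply/eqP => d0.
by move: dv; rewrite d0 dvd0n => /eqP n0'; rewrite n0' in n0.
Qed.

Lemma primeb_eq p : primeb p = prime p.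
Proof.
rewrite /primeb.
have -> : Nat.leb 2 p = (1 < p) by apply/idP/idP => [/Nat.leb_spec0/leP|/leP/Nat.leb_spec0].
have -> : List.forallb (fun k => negb (Nat.eqb (Nat.modulo p k) 0)) (List.seq 2 (p - 2))
        = all (fun k => ~~ (k %| p)) (iota 2 (p - 2)).
  rewrite seq_iota; elim: (iota 2 (p-2)) => //= k l ->.
  by rewrite mod_eq /dvdn; congr (~~ _ && _); apply/idP/idP => /eqP ->.
case: (boolP (prime p)) => [pp|/primePn np].
  rewrite prime_gt1 //=; apply/allP => k; rewrite mem_iota => /andP[k2 kp].
  apply/negP => kd; case/primeP: pp => _ /(_ k kd) /orP[] /eqP kk.
    by rewrite kk in k2.
  by move: kp k2; rewrite kk; lia.
case: np => [p2|[d /andP[d1 dp] dd]]; first by rewrite ltnNge -ltnS p2.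
apply/negbTE; rewrite negb_and; apply/orP; right; apply/negP => /allP /(_ d).
rewrite mem_iota dd /=; have -> // : (1 < d < 2 + (p - 2)) by apply/andP; split; lia.
by move/(_ isT).
Qed.

Lemma omega_eq n : 0 < n -> omega n = size (primes n).
Proof.
move=> n0; rewrite /omega seq_iota filter_eq.
have -> : @length nat = @size nat by [].
apply: perm_size; apply: uniq_perm; first exact: filter_uniq (iota_uniq _ _).
  exact: primes_uniq.
move=> p; rewrite mem_filter mem_iota mem_primes primeb_eq mod_eq n0 /=.
have -> : (Nat.eqb (n %% p) 0) = (p %| n) by rewrite /dvdn; apply/idP/idP => /eqP ->.
case pp: (prime p) => //=; case dv: (p %| n) => //=; rewrite ?andbF //.
by rewrite add1n ltnS (dvdn_leq n0 dv) prime_gt0.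
Qed.

Lemma expn_pow m k : expn m k = Nat.pow m k.
Proof. by elim: k => //= k IH; rewrite expnS IH. Qed.

Lemma prod_eq n : 0 < n ->
  n = List.fold_right (fun p acc => Nat.mul (Nat.pow p (logn p n)) acc) 1 (primes n).
Proof.
move=> n0; rewrite {1}(prod_prime_decomp n0) prime_decompE big_map.
elim: (primes n) => [|p l IH] /=; first by rewrite big_nil.
by rewrite big_cons IH expn_pow.
Qed.

Lemma all_Forall (P : nat -> Prop) (l : seq nat) :
  (forall p, p \in l -> P p) -> List.Forall P l.
Proof.
elim: l => [|x l IH] H; first by constructor.
constructor; first by apply: H; rewrite mem_head.
by apply: IH => p pl; apply: H; rewrite inE pl orbT.
Qed.

Lemma primes_props n :
  List.Forall (fun p => (2 <= p)%coq_nat /\ (1 <= logn p n)%coq_nat) (primes n).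
Proof.
apply: all_Forall => p pn; split; apply/leP.
  by move: pn; rewrite mem_primes => /andP[pp _]; apply: prime_gt1.
by rewrite logn_gt0.
Qed.

Fixpoint incr_from (k : nat) (l : list nat) : Prop :=
  match l with nil => True | h :: t => (k <= h)%coq_nat /\ incr_from (S h) t end.

Lemma incr_sorted l k : sorted ltn l -> all (leq k) l -> incr_from k l.
Proof.
elim: l k => //= h t IH k ph /andP[kh _]; split; first by apply/leP.
apply: IH; first exact: path_sorted ph.
exact: (order_path_min ltn_trans ph).
Qed.

Lemma primes_incr n : incr_from 2 (primes n).
Proof.
apply: incr_sorted; first exact: sorted_primes.
apply/allP => p; rewrite mem_primes => /andP[pp _]; exact: prime_gt1.
Qed.

Lemma ndiv_eq' n : (1 <= n)%coq_nat ->
  ndivisors n = List.fold_right (fun p acc => Nat.mul (S (logn p n)) acc) 1 (primes n).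
Proof. by move/leP; apply: ndiv_eq. Qed.
Lemma omega_eq' n : (1 <= n)%coq_nat -> omega n = List.length (primes n).
Proof. by move/leP; apply: omega_eq. Qed.
Lemma prod_eq' n : (1 <= n)%coq_nat ->
  n = List.fold_right (fun p acc => Nat.mul (Nat.pow p (logn p n)) acc) 1 (primes n).
Proof. by move/leP; apply: prod_eq. Qed.
End MC.

Open Scope R_scope.
Lemma ln_le' x y : 0 < x -> x <= y -> ln x <= ln y.
Proof. intros Hx [H|H]; [left; apply ln_increasing; lra | subst; lra]. Qed.

Lemma exp_le' x y : x <= y -> exp x <= exp y.
Proof. intros [H|H]; [left; apply exp_increasing; lra | subst; lra]. Qed.

Lemma ln_pos' x : 1 < x -> 0 < ln x.
Proof. intros H; rewrite <- ln_1; apply ln_increasing; lra. Qed.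

Lemma exp_pow' y (m : nat) : exp y ^ m = exp (INR m * y).
Proof.
induction m as [|m IH]; simpl; [rewrite Rmult_0_l, exp_0; ring|].
rewrite IH, <- exp_plus; f_equal; destruct m; simpl; ring.
Qed.

Lemma ln1p x : 0 < x -> ln (1 + x) <= x.
Proof.
intros Hx. rewrite <- (ln_exp x) at 2. apply ln_le'; [lra|]. apply exp_ineq1_le.
Qed.

Definition prodL (f : nat -> R) (l : list nat) : R := fold_right (fun p acc => f p * acc) 1 l.
Definition sumL (f : nat -> R) (l : list nat) : R := fold_right (fun p acc => f p + acc) 0 l.

Lemma prodL_mult f g l : prodL (fun p => f p * g p) l = prodL f l * prodL g l.
Proof. induction l as [|x l IH]; simpl; [ring|]. unfold prodL in *; simpl; rewrite IH; ring. Qed.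

Lemma prodL_nonneg f l : (forall p, 0 <= f p) -> 0 <= prodL f l.
Proof. intros H; induction l; simpl; [lra|]. apply Rmult_le_pos; auto. Qed.

Lemma factor_ineq (lam : R) (a p : nat) : 0 < lam -> (2 <= p)%nat -> (1 <= a)%nat ->
  INR (S a) * ln (INR p) <= (2 / lam) * exp (lam * (INR a * ln (INR p)) - 1).
Proof.
intros Hl Hp Ha.
assert (Hp' : 2 <= INR p) by (apply (le_INR 2); lia).
assert (Ha' : 1 <= INR a) by (apply (le_INR 1); lia).
assert (Hlp : 0 < ln (INR p)) by (apply ln_pos'; lra).
set (x := lam * (INR a * ln (INR p))).
assert (Hx : x <= exp (x - 1)) by (pose proof (exp_ineq1_le (x - 1)); lra).
rewrite S_INR.
apply Rle_trans with (2 * INR a * ln (INR p)).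
{ apply Rmult_le_compat_r; lra. }
replace (2 * INR a * ln (INR p)) with ((2 / lam) * x) by (unfold x; field; lra).
apply Rmult_le_compat_l; [apply Rlt_le; apply Rdiv_lt_0_compat; lra | exact Hx].
Qed.

Lemma prodL_cons f x l : prodL f (x :: l) = f x * prodL f l.
Proof. reflexivity. Qed.
Lemma sumL_cons f x l : sumL f (x :: l) = f x + sumL f l.
Proof. reflexivity. Qed.

Lemma prodL_nonnegF f l : Forall (fun p => 0 <= f p) l -> 0 <= prodL f l.
Proof. intros H; induction H; [unfold prodL; simpl; lra|]. rewrite prodL_cons. apply Rmult_le_pos; auto. Qed.

Lemma key (lam : R) (a : nat -> nat) (l : list nat) : 0 < lam ->
  Forall (fun p => (2 <= p)%nat /\ (1 <= a p)%nat) l ->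
  prodL (fun p => INR (S (a p)) * ln (INR p)) l <=
  (2 / lam) ^ length l * exp (lam * sumL (fun p => INR (a p) * ln (INR p)) l - INR (length l)).
Proof.
intros Hl HF; induction HF as [|p l [Hp Ha] HF IH].
{ unfold prodL, sumL; simpl. rewrite Rmult_0_r, Rminus_0_r, exp_0; lra. }
rewrite prodL_cons, sumL_cons. cbn [length].
assert (Hp' : 2 <= INR p) by (apply (le_INR 2); lia).
assert (Hlp : 0 < ln (INR p)) by (apply ln_pos'; lra).
set (S0 := sumL (fun p0 : nat => INR (a p0) * ln (INR p0)) l) in *.
replace (exp (lam * (INR (a p) * ln (INR p) + S0) - INR (S (length l)))) with
  (exp (lam * (INR (a p) * ln (INR p)) - 1) * exp (lam * S0 - INR (length l))).
2:{ rewrite <- exp_plus; f_equal; rewrite S_INR; ring. }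
replace ((2 / lam) ^ S (length l) *
   (exp (lam * (INR (a p) * ln (INR p)) - 1) * exp (lam * S0 - INR (length l))))
 with (((2 / lam) * exp (lam * (INR (a p) * ln (INR p)) - 1)) *
   ((2 / lam) ^ length l * exp (lam * S0 - INR (length l)))) by (simpl; ring).
apply Rmult_le_compat.
- apply Rmult_le_pos; [apply pos_INR | lra].
- apply prodL_nonnegF. eapply Forall_impl; [|exact HF]. intros q [Hq _].
  assert (2 <= INR q) by (apply (le_INR 2); lia).
  assert (0 < ln (INR q)) by (apply ln_pos'; lra).
  apply Rmult_le_pos; [apply pos_INR | lra].
- apply factor_ineq; auto.
- exact IH.
Qed.

Fixpoint Qf (k m : nat) : R :=
  match m with O => 1 | S m => ln (INR k) * Qf (S k) m end.

Lemma Qf_pos k m : (2 <= k)%nat -> 0 < Qf k m.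
Proof.
revert k; induction m as [|m IH]; intros k Hk; simpl; [lra|].
apply Rmult_lt_0_compat; [apply ln_pos'; apply (lt_INR 1); lia | apply IH; lia].
Qed.

Lemma Qf_S k m : Qf k (S m) = Qf k m * ln (INR (k + m)).
Proof.
revert k; induction m as [|m IH]; intros k.
- simpl. rewrite Nat.add_0_r; ring.
- change (Qf k (S (S m))) with (ln (INR k) * Qf (S k) (S m)). rewrite IH.
  simpl Qf. replace (S k + m)%nat with (k + S m)%nat by lia. ring.
Qed.

Lemma incr_weaken k k' l : MC.incr_from k' l -> (k <= k')%nat -> MC.incr_from k l.
Proof. destruct l as [|h t]; simpl; auto. intros [H1 H2] H; split; [lia|auto]. Qed.

Lemma prod_ln_ge k l : (2 <= k)%nat -> MC.incr_from k l ->
  Qf k (length l) <= prodL (fun p => ln (INR p)) l.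
Proof.
revert k; induction l as [|h t IH]; intros k Hk Hi.
{ unfold prodL; simpl; lra. }
destruct Hi as [Hh Ht]. rewrite prodL_cons. cbn [length Qf].
apply Rmult_le_compat.
- left; apply ln_pos'; apply (lt_INR 1); lia.
- left; apply Qf_pos; lia.
- apply ln_le'; [apply (lt_INR 0); lia | apply le_INR; lia].
- apply IH; [lia|]. apply incr_weaken with (S h); auto; lia.
Qed.

Lemma ln_prodL (a : nat -> nat) l :
  Forall (fun p => (2 <= p)%nat) l ->
  ln (prodL (fun p => INR p ^ a p) l) = sumL (fun p => INR (a p) * ln (INR p)) l.
Proof.
intros H; induction H as [|p l Hp H IH].
{ unfold prodL, sumL; simpl; apply ln_1. }
rewrite prodL_cons, sumL_cons.
assert (0 < INR p) by (apply (lt_INR 0); lia).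
rewrite ln_mult, ln_pow, IH; auto.
- apply pow_lt; auto.
- clear IH. induction H as [|q l Hq H IH2]; [unfold prodL; simpl; lra|].
  rewrite prodL_cons. apply Rmult_lt_0_compat; auto. apply pow_lt, (lt_INR 0); lia.
Qed.

Lemma step (s : nat) : (2 <= s)%nat ->
  ln (INR (S s)) ^ S s <= exp (/ ln (INR s)) * ln (INR s) ^ s * ln (INR (2 + s)).
Proof.
intros Hs.
assert (Hs' : 2 <= INR s) by (apply (le_INR 2); lia).
assert (Hl : 0 < ln (INR s)) by (apply ln_pos'; lra).
assert (Hl1 : 0 < ln (INR (S s))) by (apply ln_pos'; rewrite S_INR; lra).
assert (H1 : ln (INR (S s)) <= ln (INR s) * (1 + / (INR s * ln (INR s)))).
{ rewrite S_INR. replace (INR s + 1) with (INR s * (1 + / INR s)) by (field; lra).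
  rewrite ln_mult by (try apply Rplus_lt_0_compat; try apply Rinv_0_lt_compat; lra).
  pose proof (ln1p (/ INR s) ltac:(apply Rinv_0_lt_compat; lra)).
  replace (ln (INR s) * (1 + / (INR s * ln (INR s)))) with (ln (INR s) + / INR s) by (field; lra).
  lra. }
assert (H2 : ln (INR (S s)) ^ s <= exp (/ ln (INR s)) * ln (INR s) ^ s).
{ apply Rle_trans with ((ln (INR s) * (1 + / (INR s * ln (INR s)))) ^ s).
  { apply pow_incr; lra. }
  rewrite Rpow_mult_distr, Rmult_comm. apply Rmult_le_compat_r.
  { left; apply pow_lt; lra. }
  apply Rle_trans with (exp (/ (INR s * ln (INR s))) ^ s).
  { apply pow_incr. split.
    - assert (0 < / (INR s * ln (INR s))) by (apply Rinv_0_lt_compat, Rmult_lt_0_compat; lra). lra.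
    - apply exp_ineq1_le. }
  rewrite exp_pow'. right; f_equal; field; lra. }
change (ln (INR (S s)) ^ S s) with (ln (INR (S s)) * ln (INR (S s)) ^ s).
assert (H3 : ln (INR (S s)) <= ln (INR (2 + s))).
{ apply ln_le'; [apply (lt_INR 0); lia|]. apply le_INR; lia. }
replace (exp (/ ln (INR s)) * ln (INR s) ^ s * ln (INR (2 + s))) with
  (ln (INR (2 + s)) * (exp (/ ln (INR s)) * ln (INR s) ^ s)) by ring.
apply Rmult_le_compat; [lra | left; apply pow_lt; lra | exact H3 | exact H2].
Qed.

Lemma nat_above r : exists N : nat, r < INR N.
Proof.
destruct (archimed r) as [H1 _].
destruct (Z_le_gt_dec (up r) 0%Z) as [Hz|Hz].
- exists 0%nat. simpl. apply IZR_le in Hz. lra.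
- exists (Z.to_nat (up r)). rewrite INR_IZR_INZ, Z2Nat.id by lia. lra.
Qed.

Lemma lnpow_nonneg t : 0 <= ln (INR t) ^ t.
Proof.
destruct t as [|t]; [simpl; lra|]. apply pow_le.
rewrite <- ln_1. apply ln_le'; [lra|]. apply (le_INR 1); lia.
Qed.

Section Bound.
Variable q : R.
Hypothesis Hq : 1 < q.

Definition V (t : nat) : R := ln (INR t) ^ t / (q ^ t * Qf 2 t).

Fixpoint W (m : nat) : R := match m with O => V 0 | S m => V (S m) + W m end.

Lemma V_nonneg t : 0 <= V t.
Proof.
unfold V. apply Rmult_le_pos; [apply lnpow_nonneg|].
left; apply Rinv_0_lt_compat, Rmult_lt_0_compat; [apply pow_lt; lra | apply Qf_pos; lia].
Qed.

Lemma V_le_W t m : (t <= m)%nat -> V t <= W m.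
Proof.
induction m as [|m IH]; intros H.
- assert (t = 0%nat) by lia; subst; simpl; lra.
- simpl. destruct (Nat.eq_dec t (S m)) as [->|Hne].
  + pose proof (W_nonneg := V_nonneg). assert (0 <= W m).
    { clear IH H. induction m; simpl; [apply V_nonneg|]. pose proof (V_nonneg (S m)); lra. }
    lra.
  + pose proof (V_nonneg (S m)). specialize (IH ltac:(lia)). lra.
Qed.

Lemma bound_ex : exists C, 0 < C /\ forall s, (2 <= s)%nat -> ln (INR s) ^ s <= C * q ^ s * Qf 2 s.
Proof.
destruct (nat_above (exp (/ ln q))) as [N HN].
set (S0 := (N + 2)%nat).
assert (Hlq : 0 < ln q) by (apply ln_pos'; lra).
assert (HW : 0 <= W S0).
{ pose proof (V_le_W S0 S0 (le_n _)); pose proof (V_nonneg S0); lra. }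
exists (W S0 + 1). split; [lra|].
assert (small : forall t, (t <= S0)%nat -> ln (INR t) ^ t <= (W S0 + 1) * q ^ t * Qf 2 t).
{ intros t Ht. pose proof (V_le_W t S0 Ht) as HV. unfold V in HV.
  assert (Hpos : 0 < q ^ t * Qf 2 t) by (apply Rmult_lt_0_compat; [apply pow_lt; lra | apply Qf_pos; lia]).
  apply Rle_trans with ((W S0) * (q ^ t * Qf 2 t)).
  - replace (ln (INR t) ^ t) with (ln (INR t) ^ t / (q ^ t * Qf 2 t) * (q ^ t * Qf 2 t)) by (unfold Rdiv; rewrite Rmult_assoc, Rinv_l, Rmult_1_r; lra).
    apply Rmult_le_compat_r; lra.
  - rewrite Rmult_assoc. apply Rmult_le_compat_r; lra. }
intros s Hs. destruct (le_lt_dec s S0) as [Hle|Hlt]; [apply small; auto|].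
assert (big : forall k, ln (INR (S0 + k)) ^ (S0 + k) <= (W S0 + 1) * q ^ (S0 + k) * Qf 2 (S0 + k)).
{ induction k as [|k IH].
  - rewrite Nat.add_0_r. apply small; lia.
  - replace (S0 + S k)%nat with (S (S0 + k)) by lia.
    set (u := (S0 + k)%nat) in *.
    assert (Hu : (2 <= u)%nat) by (unfold u, S0; lia).
    assert (Hu' : exp (/ ln q) < INR u).
    { apply Rlt_le_trans with (INR N); auto. apply le_INR; unfold u, S0; lia. }
    assert (Hlu : / ln q < ln (INR u)).
    { rewrite <- (ln_exp (/ ln q)). apply ln_increasing; auto. apply exp_pos. }
    assert (Hlu0 : 0 < ln (INR u)) by (pose proof (Rinv_0_lt_compat _ Hlq); lra).
    assert (He : exp (/ ln (INR u)) <= q).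
    { rewrite <- (exp_ln q) by lra. apply exp_le'.
      rewrite <- (Rinv_inv (ln q)). left. apply Rinv_lt_contravar; auto.
      apply Rmult_lt_0_compat; auto. apply Rinv_0_lt_compat; auto. }
    pose proof (step u Hu) as Hst.
    rewrite Qf_S. replace (2 + u)%nat with (2 + u)%nat by lia.
    assert (Hl2 : 0 < ln (INR (2 + u))) by (apply ln_pos'; apply (lt_INR 1); lia).
    apply Rle_trans with (exp (/ ln (INR u)) * ln (INR u) ^ u * ln (INR (2 + u))); auto.
    apply Rle_trans with (q * ((W S0 + 1) * q ^ u * Qf 2 u) * ln (INR (2 + u))).
    + apply Rmult_le_compat_r; [lra|]. apply Rmult_le_compat; auto.
      * left; apply exp_pos.
      * apply lnpow_nonneg.
    + right. simpl pow. ring. }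
replace s with (S0 + (s - S0))%nat by lia. apply big.
Qed.
End Bound.

Lemma INR_fold_mul (g : nat -> nat) (l : list nat) :
  INR (fold_right (fun p acc => Nat.mul (g p) acc) 1%nat l) = prodL (fun p => INR (g p)) l.
Proof. induction l as [|x l IH]; [reflexivity|]. simpl fold_right. rewrite mult_INR, IH. reflexivity. Qed.

Lemma INR_fold_pow (a : nat -> nat) (l : list nat) :
  INR (fold_right (fun p acc => Nat.mul (Nat.pow p (a p)) acc) 1%nat l) = prodL (fun p => INR p ^ a p) l.
Proof. induction l as [|x l IH]; [reflexivity|]. simpl fold_right. rewrite mult_INR, pow_INR, IH. reflexivity. Qed.

Lemma sumL_pos f l : Forall (fun p => 0 < f p) l -> l <> nil -> 0 < sumL f l.
Proof.
intros H Hn; destruct H as [|x l Hx H]; [congruence|]. rewrite sumL_cons.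
assert (0 <= sumL f l). { clear Hn Hx. induction H; [unfold sumL; simpl; lra|]. rewrite sumL_cons; lra. }
lra.
Qed.

Theorem lemma3p2 :
  forall eps : R, 0 < eps ->
  exists C : R, 0 < C /\
    forall n : nat, (1 <= n)%nat -> (2 <= omega n)%nat ->
      INR (ndivisors n) <=
      C * (((2 + eps) * ln (INR n)) / (INR (omega n) * ln (INR (omega n)))) ^ (omega n).
Proof.
intros eps Heps.
set (q := 1 + eps / 2).
destruct (bound_ex q ltac:(unfold q; lra)) as [C [HC Hb]].
exists C; split; [exact HC|].
intros n Hn Hom.
assert (Hn0 : (0 < n)%nat) by lia.
set (l := prime.primes n).
set (a := fun p => prime.logn p n).
assert (HD : INR (ndivisors n) = prodL (fun p => INR (S (a p))) l).
{ rewrite (MC.ndiv_eq' n Hn). apply INR_fold_mul. }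
assert (HN : INR n = prodL (fun p => INR p ^ a p) l).
{ rewrite (MC.prod_eq' n Hn) at 1. apply INR_fold_pow. }
assert (Hs : omega n = length l) by (apply MC.omega_eq'; exact Hn).
assert (HF : Forall (fun p => (2 <= p)%nat /\ (1 <= a p)%nat) l) by apply MC.primes_props.
assert (Hi : MC.incr_from 2 l) by apply MC.primes_incr.
rewrite HD, Hs. rewrite Hs in Hom.
set (s := length l) in *.
assert (HL : ln (INR n) = sumL (fun p => INR (a p) * ln (INR p)) l).
{ rewrite HN. apply ln_prodL. eapply Forall_impl; [|exact HF]. intros p [H _]; exact H. }
set (L := ln (INR n)) in *.
assert (HLpos : 0 < L).
{ rewrite HL. apply sumL_pos.
  - eapply Forall_impl; [|exact HF]. intros p [H1 H2].
    apply Rmult_lt_0_compat; [apply (lt_INR 0); lia | apply ln_pos'; apply (lt_INR 1); lia].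
  - intros E. unfold s in Hom. rewrite E in Hom. simpl in Hom. lia. }
assert (Hs2 : 2 <= INR s) by (apply (le_INR 2); exact Hom).
set (lam := INR s / L).
assert (Hlam : 0 < lam) by (unfold lam; apply Rdiv_lt_0_compat; lra).
pose proof (key lam a l Hlam HF) as HK.
rewrite <- HL in HK. fold s in HK.
replace (lam * L - INR s) with 0 in HK by (unfold lam; field; lra).
rewrite exp_0, Rmult_1_r, prodL_mult in HK.
pose proof (prod_ln_ge 2 l (le_n _) Hi) as HQ. fold s in HQ.
pose proof (Hb s Hom) as HB.
set (D := prodL (fun p => INR (S (a p))) l) in *.
set (P := prodL (fun p => ln (INR p)) l) in *.
set (X := (2 / lam) ^ s) in *.
set (Qv := Qf 2 s) in *.
assert (HQpos : 0 < Qv) by (apply Qf_pos; lia).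
assert (HDpos : 0 <= D).
{ apply prodL_nonneg. intros p. apply pos_INR. }
assert (Hlns : 0 < ln (INR s)) by (apply ln_pos'; lra).
assert (HY : 0 < ln (INR s) ^ s) by (apply pow_lt; lra).
assert (HZ : 0 < q ^ s) by (apply pow_lt; unfold q; lra).
replace ((2 + eps) * L / (INR s * ln (INR s))) with (q * (2 / lam) * / ln (INR s)).
2:{ unfold q, lam. field. repeat split; lra. }
rewrite !Rpow_mult_distr, pow_inv. fold X.
assert (H1 : D * ln (INR s) ^ s <= C * q ^ s * X).
{ apply Rle_trans with (D * (C * q ^ s * Qv)).
  { apply Rmult_le_compat_l; auto. }
  replace (D * (C * q ^ s * Qv)) with ((C * q ^ s) * (D * Qv)) by ring.
  apply Rmult_le_compat_l; [apply Rmult_le_pos; lra|].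
  apply Rle_trans with (D * P); [apply Rmult_le_compat_l; auto | exact HK]. }
apply Rmult_le_reg_r with (ln (INR s) ^ s); auto.
replace (C * (q ^ s * X * / ln (INR s) ^ s) * ln (INR s) ^ s) with (C * q ^ s * X) by (field; lra).
exact H1.
Qed.
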